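(* Let $m\geq 2$ and let $f=a_0+a_1z+\cdots+a_mz^m\in\mathbb{Z}[z]$ be a primitive polynomial with $a_0a_m\neq 0$ such that $$|a_{m-1}|>1+|a_0||a_m|^{m-1}+|a_1||a_m|^{m-2}+\cdots+|a_{m-2}||a_m|.$$ Then $f$ is irreducible in $\mathbb{Z}[z]$.
   Context: A polynomial in $\mathbb{Z}[z]$ is primitive if the greatest common divisor of its coefficients is $1$. *)

(* Defs.v *)
From mathcomp Require Import all_boot all_order all_algebra.
Set Implicit Arguments. Unset Strict Implicit. Unset Printing Implicit Defensive.
Import Order.TTheory GRing.Theory Num.Theory.
Local Open Scope ring_scope.

Definition primitive_intpoly (f : {poly int}) : Prop :=
  \big[gcdz/0]_(i < size f) f`_i = 1.

Definition irreducible_in_Zz (f : {poly int}) : Prop :=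
  f != 0 /\ f \isn't a GRing.unit /\
  forall g h : {poly int}, f = g * h -> g \is a GRing.unit \/ h \is a GRing.unit.

(* Main.v *)
Require Import Defs.
From mathcomp Require Import all_boot all_order all_algebra closed_field algC.
From mathcomp Require Import ring.
Import Order.TTheory GRing.Theory Num.Theory.
Local Open Scope ring_scope.
Lemma sum_bound (u : nat -> algC) (z : algC) k : 1 <= `|z| ->
  `|\sum_(i < k.+1) u i * z ^+ i| <= (\sum_(i < k.+1) `|u i|) * `|z| ^+ k.
Proof.
move=> z1; rewrite mulr_suml; apply: le_trans (ler_norm_sum _ _ _) _.
apply: ler_sum => i _; rewrite normrM normrX; apply: ler_wpM2l; first exact: normr_ge0.
by apply: ler_weXn2l => //; rewrite -ltnS.
Qed.

Lemma scale_sum (u : nat -> algC) (x B : algC) N k : (k <= N.+1)%N ->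
  (\sum_(i < k) u i * x ^+ i) * B ^+ N =
  \sum_(i < k) (u i * B ^+ (N - i)) * (B * x) ^+ i.
Proof.
move=> hk; rewrite mulr_suml; apply: eq_bigr => i _.
have hi : (i <= N)%N by rewrite -ltnS (leq_trans (ltn_ord i) hk).
by rewrite exprMn -{1}(subnK hi) exprD mulrACA [x ^+ i * _]mulrC.
Qed.


Lemma core n (fc P : {poly algC}) (x y : algC) :
  fc = ('X - x%:P) * P -> size fc = n.+3 ->
  (\sum_(i < n.+1) `|fc`_i| * `|fc`_n.+2| ^+ (n.+1 - i)) + 2 <= `|fc`_n.+1| ->
  P.[y] = 0 -> 1 <= `|fc`_n.+2 * x| -> 1 <= `|fc`_n.+2 * y| -> False.
Proof.
move=> Hf Hs Hc Py Hx Hy.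
set B := fc`_n.+2 in Hc Hx Hy.
set s := \sum_(i < n.+1) _ in Hc.
have coefE i : fc`_i = (if i == 0%N then 0 else P`_i.-1) - x * P`_i.
  by rewrite Hf mulrBl coefB coefXM coefCM.
have P0 : P != 0.
  by apply/eqP => P0; move: Hs; rewrite Hf P0 mulr0 size_poly0.
have sP : size P = n.+2.
  by move: Hs; rewrite Hf size_monicM ?monicXsubC // size_XsubC => -[].
have PB : P`_n.+1 = B.
  have P2 : P`_n.+2 = 0 by rewrite nth_default // sP.
  by rewrite /B coefE /= P2 mulr0 subr0.
set α := B * x.
set c := fc`_n.+1 in Hc.
have rootx : fc.[x] = 0 by rewrite Hf hornerM hornerXsubC subrr mul0r.
have eq1 : \sum_(i < n.+1) (fc`_i * B ^+ (n.+1 - i)) * α ^+ i + α ^+ n.+1 * (α + c) = 0.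
  have := congr1 (fun t => t * B ^+ n.+1) rootx.
  rewrite mul0r (horner_coef_wide _ (_ : (size fc <= n.+3)%N)) ?Hs //.
  rewrite (big_ord_recr n.+2) (big_ord_recr n.+1) /= !mulrDl (scale_sum _ _ _ n.+1 n.+1 (leqnSn _)) => H.
  apply: (etrans _ H); rewrite -addrA; congr (_ + _).
  rewrite /α /c /B !exprS exprMn; move: (x ^+ n) (fc`_n.+2 ^+ n) => X Y; ring.
have sE : s = \sum_(i < n.+1) `|fc`_i * B ^+ (n.+1 - i)|.
  by apply: eq_bigr => i _; rewrite normrM normrX.
have A1' : 1 <= `|α| := Hx.
have key1 : `|α| * `|α + c| <= s.
  have An : 0 < `|α| ^+ n by apply: lt_le_trans (exprn_ege1 _ A1').
  rewrite -(ler_pM2l An) mulrA -exprSr -normrX -normrM.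
  have -> : α ^+ n.+1 * (α + c) = - \sum_(i < n.+1) (fc`_i * B ^+ (n.+1 - i)) * α ^+ i.
    by apply/eqP; rewrite -addr_eq0 addrC eq1.
  rewrite normrN mulrC sE; exact: (sum_bound (fun i : nat => fc`_i * B ^+ (n.+1 - i))).
set A := `|α| in A1' key1.
set C := `|c| in Hc.
have A1 : s + 1 < A.
  have h : (A - 1) * (C - 1 - A) < 0.
    have h1 : A * (C - A) <= s.
      apply: le_trans key1; apply: ler_wpM2l; first exact: normr_ge0.
      by rewrite [α + c]addrC; exact: lerB_normD.
    rewrite (_ : (A - 1) * (C - 1 - A) = A * (C - A) - (C - 1)); last by ring.
    rewrite subr_lt0; apply: le_lt_trans h1 _.
    rewrite ltrBrDr; apply: lt_le_trans Hc; by rewrite ltrD2l ltr1n.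
  have hA : 0 < A - 1.
    rewrite lt0r subr_ge0 A1' andbT; apply/eqP => e; move: h; by rewrite e mul0r ltxx.
  move: h; rewrite pmulr_rlt0 // subr_lt0 => h.
  apply: le_lt_trans h; rewrite lerBrDr -addrA; exact: Hc.
pose q j := P`_j * B ^+ (n - j).
have recq j : (j <= n)%N ->
   α * q j = (if j == 0%N then 0 else q j.-1) - fc`_j * B ^+ (n.+1 - j).
  move=> jn; rewrite coefE /q /α; case: j jn => [|j] jn /=.
    rewrite subn0 exprS; move: (B ^+ n) => Y; ring.
  rewrite subSS; have -> : (n - j = (n - j.+1).+1)%N by rewrite subnSK.
  rewrite exprS; move: (B ^+ (n - j.+1)) => Y; ring.
set S := \sum_(j < n.+1) `|q j|.
have S1 : S < 1.
  have h : A * S <= S + s.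
    rewrite mulr_sumr sE.
    have step (j : 'I_n.+1) : A * `|q j| <= `|if (j : nat) == 0%N then 0 else q j.-1| +
        `|fc`_j * B ^+ (n.+1 - j)|.
      rewrite /A -normrM recq; last by rewrite -ltnS.
      exact: ler_normB.
    apply: le_trans (ler_sum _ (fun j _ => step j)) _.
    rewrite big_split /= lerD2r big_ord_recl /= normr0 add0r.
    rewrite /S big_ord_recr /= lerDl; exact: normr_ge0.
  have hA : 0 < A - 1 by rewrite subr_gt0; apply: le_lt_trans A1; rewrite lerDr sE sumr_ge0 // => i _; exact: normr_ge0.
  rewrite -(ltr_pM2l hA) mulr1 mulrBl mul1r ltrBlDr.
  apply: le_lt_trans h _; rewrite addrC ltrD2r ltrBrDr; exact: A1.
set β := B * y in Hy.
have eq2 : \sum_(i < n.+1) q i * β ^+ i + β ^+ n.+1 = 0.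
  have := congr1 (fun t => t * B ^+ n) Py.
  rewrite mul0r (horner_coef_wide _ (_ : (size P <= n.+2)%N)) ?sP //.
  rewrite (big_ord_recr n.+1) /= mulrDl (scale_sum _ _ _ n n.+1 (leqnn _)) => H.
  apply: (etrans _ H); congr (_ + _).
  rewrite PB /β exprS exprMn exprS; move: (B ^+ n) (y ^+ n) => X Y; ring.
have Bn : 0 < `|β| ^+ n by apply: lt_le_trans (exprn_ege1 _ Hy).
have h : `|β ^+ n.+1| < `|β| ^+ n.+1.
  have -> : β ^+ n.+1 = - \sum_(i < n.+1) q i * β ^+ i.
    by apply/eqP; rewrite -addr_eq0 addrC eq2.
  rewrite normrN.
  apply: le_lt_trans (sum_bound q _ n Hy) _.
  apply: lt_le_trans (_ : `|β| ^+ n <= _); last by apply: ler_weXn2l.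
  by rewrite gtr_pMl.
by rewrite normrX ltxx in h.
Qed.

Lemma scaleprod (B : algC) (r : seq algC) :
  B ^+ size r * \prod_(z <- r) (- z) = \prod_(z <- r) (- (B * z)).
Proof.
elim: r => [|z r IH]; first by rewrite !big_nil mulr1.
rewrite !big_cons /= -IH exprS; move: (B ^+ size r) (\prod_(j <- r) - j) => X Y; ring.
Qed.

Lemma big_root (p : {poly int}) (B : algC) :
  (2 <= size p)%N -> p`_0 != 0 -> `|(lead_coef p)%:~R| <= `|B| -> 1 <= `|B| ->
  exists x : algC, root (map_poly intr p) x /\ 1 <= `|B * x|.
Proof.
move=> sp p0 hl B1.
set pc := map_poly intr p.
have spc : size pc = size p by rewrite size_map_inj_poly //; exact: intr_inj.
have lpc : lead_coef pc = (lead_coef p)%:~R.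
  by rewrite lead_coef_map_inj //; exact: intr_inj.
have l0 : lead_coef pc != 0 by rewrite lead_coef_eq0 -size_poly_eq0 spc -lt0n (leq_trans _ sp).
have [r Hr] := closed_field_poly_normal pc.
case Hall: (all (fun z => `|B * z| < 1) r); last first.
  move/negbT/allPn: Hall => [z zr hz]; exists z; split.
    by rewrite Hr rootZ // root_prod_XsubC.
  by rewrite real_leNgt ?real1 ?normr_real.
exfalso.
case: r Hr Hall => [|z0 r] Hr Hall.
  by move: spc; rewrite Hr big_nil alg_polyC size_polyC l0 => e; rewrite -e in sp.
have e0 : pc.[0] = lead_coef pc * \prod_(z <- z0 :: r) (- z).
  rewrite {1}Hr hornerZ horner_prod; congr (_ * _); apply: eq_bigr => z _.
  by rewrite hornerXsubC sub0r.
have e1 : pc.[0] = (p`_0)%:~R by rewrite horner_coef0 coef_map.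
move: Hall => /= /andP [h0 Hall].
have hprod : \prod_(z <- z0 :: r) `|B * z| < 1.
  rewrite big_cons; apply: le_lt_trans h0.
  rewrite -{2}(mulr1 `|B * z0|); apply: ler_wpM2l; first exact: normr_ge0.
  rewrite big_seq; apply: prodr_ile1 => z zr; rewrite normr_ge0 /= ltW //.
  exact: (allP Hall z zr).
set k := size (z0 :: r).
have hk : 1 <= `|B| ^+ k by exact: exprn_ege1.
have key : `|(p`_0)%:~R : algC| * `|B| ^+ k < `|B| ^+ k.
  rewrite -e1 e0 normrM mulrAC -mulrA -normrX -normrM scaleprod normr_prod normrX.
  apply: lt_le_trans (_ : `|lead_coef pc| <= _).
    by rewrite (eq_bigr _ (fun i _ => normrN _)) gtr_pMr // normr_gt0.
  rewrite lpc; apply: le_trans hl _; rewrite -{1}(expr1 `|B|); exact: ler_weXn2l.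
have p1 : 1 <= `|(p`_0)%:~R : algC|.
  by rewrite -intr_norm ler1z -gtz0_ge1 normr_gt0.
move: key; rewrite gtr_pMl ?(lt_le_trans _ hk) //.
by rewrite real_ltNge ?real1 ?normr_real // p1.
Qed.


Lemma const_unit (f g h : {poly int}) : f = g * h -> primitive_intpoly f ->
  f != 0 -> (size g <= 1)%N -> g \is a GRing.unit.
Proof.
move=> fgh prim f0 sg.
have eg := size1_polyC sg.
have g0 : (g`_0 %| 1)%Z.
  suff : (g`_0 %| \big[gcdz/0]_(i < size f) f`_i)%Z.
    by move: prim; rewrite /primitive_intpoly => ->.
  apply: (big_ind (fun v => (g`_0 %| v)%Z)) => //.
    by move=> u v hu hv; rewrite dvdz_gcd hu hv.
  move=> i _; move: (nat_of_ord i) => j.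
  have -> : f`_j = g`_0 * h`_j by rewrite fgh {1}eg coefCM.
  exact: dvdz_mulr.
rewrite poly_unitE; apply/andP; split.
  apply/eqP/anti_leq; rewrite sg lt0n size_poly_eq0; apply/eqP => g00.
  by move: f0; rewrite fgh g00 mul0r eqxx.
have [k hk] := dvdzP g0; apply: (intUnitRing.unitzPl (n:=k)); by rewrite -hk.
Qed.

Theorem theoremB (m : nat) (f : {poly int}) :
  (2 <= m)%N ->
  size f = m.+1 ->
  primitive_intpoly f ->
  f`_0 * f`_m != 0 ->
  `|f`_m.-1| > 1 + \sum_(i < m.-1) `|f`_i| * `|f`_m| ^+ (m.-1 - i) ->
  irreducible_in_Zz f.
Proof.
case: m => [|[|n]] // _ sf prim f0m hc /=.
have f0 : f != 0 by rewrite -size_poly_eq0 sf.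
split => //; split; first by rewrite poly_unitE sf.
move=> g h fgh.
have [sg|sg] := leqP (size g) 1; first by left; exact: const_unit fgh prim f0 sg.
have [sh|sh] := leqP (size h) 1.
  by right; apply: (@const_unit f h g) prim f0 sh; rewrite mulrC.
exfalso.
have lf : lead_coef f = f`_n.+2 by rewrite lead_coefE sf.
have lgh : lead_coef g * lead_coef h = f`_n.+2 by rewrite -lf fgh lead_coefM.
have g0h0 : g`_0 * h`_0 = f`_0 by rewrite fgh coef0M.
have [f00 fm0] : f`_0 != 0 /\ f`_n.+2 != 0 by move: f0m; rewrite mulf_eq0 negb_or => /andP.
have g00 : g`_0 != 0 by apply: contraNneq f00 => e; rewrite -g0h0 e mul0r.
have h00 : h`_0 != 0 by apply: contraNneq f00 => e; rewrite -g0h0 e mulr0.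
have lg0 : lead_coef g != 0 by apply: contraNneq fm0 => e; rewrite -lgh e mul0r.
have lh0 : lead_coef h != 0 by apply: contraNneq fm0 => e; rewrite -lgh e mulr0.
set B : algC := (f`_n.+2)%:~R.
have B1 : 1 <= `|B| by rewrite -intr_norm ler1z -gtz0_ge1 normr_gt0.
have hlg : `|(lead_coef g)%:~R : algC| <= `|B|.
  rewrite -!intr_norm ler_int -lgh normrM ler_pMr ?normr_gt0 //.
  by rewrite -gtz0_ge1 normr_gt0.
have hlh : `|(lead_coef h)%:~R : algC| <= `|B|.
  rewrite -!intr_norm ler_int -lgh normrM ler_pMl ?normr_gt0 //.
  by rewrite -gtz0_ge1 normr_gt0.
have [x [rx Hx]] := big_root _ _ sg g00 hlg B1.
have [y [ry Hy]] := big_root _ _ sh h00 hlh B1.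
have [q Hq] := factor_theorem _ _ rx.
pose fc : {poly algC} := map_poly intr f.
have Hf : fc = ('X - x%:P) * (q * map_poly intr h).
  rewrite /fc fgh mulrA [_ * q]mulrC -Hq; exact: rmorphM.
have sfc : size fc = n.+3 by rewrite size_map_inj_poly //; exact: intr_inj.
have fcE i : fc`_i = (f`_i)%:~R by rewrite coef_map.
apply: (@core n fc _ x y Hf sfc); last 3 first.
- by rewrite hornerM (rootP ry) mulr0.
- by rewrite fcE.
- by rewrite fcE.
rewrite fcE fcE.
have hc' : 1 + \sum_(i < n.+1) `|f`_i| * `|f`_n.+2| ^+ (n.+1 - i) + 1 <= `|f`_n.+1|.
  by rewrite lezD1.
rewrite -(ler_int algC) intr_norm in hc'; apply: le_trans hc'.
rewrite !intrD rmorph_sum /= addrAC addrC; apply: lerD; last exact: lexx.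
apply: ler_sum => i _.
by rewrite fcE intrM rmorphXn /= !intr_norm.
Qed.
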